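(* Let $q(z)$ be a monic real polynomial of degree $p$ with $q(1)=0$, let $r(z)$ be a polynomial of degree $p-1$, and let $\ell>0$. Then there exist a constant $C_0>0$, depending only on $q$, $r$ and $\ell$, and some $\mu_0\in(0,\ell)$, such that for every $\mu\in(0,\mu_0)$, $$\sup_{\nu\in[\mu,\ell]}\rho\big(q(z)-\nu\, r(z)\big)\ge 1-C_0\frac{\mu}{\ell}.$$
   Context: For a polynomial $s(z)$, $\rho(s)$ denotes the maximum modulus of a (complex) root of $s$. *)

(* Defs.v *)
From HB Require Import structures.
From mathcomp Require Import all_boot all_order all_algebra.
From mathcomp Require Import complex.
From mathcomp Require Import all_classical all_reals.
Set Implicit Arguments. Unset Strict Implicit. Unset Printing Implicit Defensive.
Import Order.TTheory GRing.Theory Num.Theory.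
Local Open Scope ring_scope.
Local Open Scope classical_set_scope.

Definition cmod (R : rcfType) (z : R[i]) : R :=
  Num.sqrt (complex.Re z ^+ 2 + complex.Im z ^+ 2).

Definition rho (R : realType) (s : {poly R}) : R :=
  sup [set cmod z | z in [set z : R[i] | root (map_poly (real_complex R) s) z]].

(* Main.v *)
Require Import Defs.
From HB Require Import structures.
From mathcomp Require Import all_boot all_order all_algebra.
From mathcomp Require Import complex.
From mathcomp Require Import all_classical all_reals.
From mathcomp Require Import ring lra.
Import Order.TTheory GRing.Theory Num.Theory.
Local Open Scope ring_scope.
Local Open Scope complex_scope.
Local Open Scope classical_set_scope.

Section Aux.
Variable R : rcfType.
Local Notation C := R[i].

Lemma normCE (z : C) : `|z| = (cmod z)%:C.
Proof. by rewrite normc_def. Qed.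

Lemma cmod_ge0 (z : C) : 0 <= cmod z.
Proof. exact: sqrtr_ge0. Qed.

Lemma cmodM (a b : C) : cmod (a * b) = cmod a * cmod b.
Proof. apply: complexI; by rewrite rmorphM /= -!normCE normrM. Qed.

Lemma cmodV (a : C) : cmod (a^-1) = (cmod a)^-1.
Proof. apply: complexI; by rewrite fmorphV /= -!normCE normfV. Qed.

Lemma cmodX (a : C) n : cmod (a ^+ n) = cmod a ^+ n.
Proof. apply: complexI; by rewrite rmorphXn /= -!normCE normrX. Qed.

Lemma cmodN (a : C) : cmod (- a) = cmod a.
Proof. apply: complexI; by rewrite -!normCE normrN. Qed.

Lemma cmodD (a b : C) : cmod (a + b) <= cmod a + cmod b.
Proof. by rewrite -lecR rmorphD /= -!normCE ler_normD. Qed.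

Lemma cmod_sum (I : Type) (s : seq I) (g : I -> C) :
  cmod (\sum_(i <- s) g i) <= \sum_(i <- s) cmod (g i).
Proof.
elim: s => [|a s IH]; first by rewrite !big_nil /cmod /= expr0n /= addr0 sqrtr0.
rewrite !big_cons; apply: le_trans (cmodD _ _) _; by rewrite lerD2l.
Qed.

Lemma cmod_real (a : R) : cmod a%:C = `|a|.
Proof. by rewrite /cmod /= expr0n /= addr0 sqrtr_sqr. Qed.

Lemma Re_le_cmod (z : C) : complex.Re z <= cmod z.
Proof.
apply: le_trans (ler_norm _) _; rewrite -sqrtr_sqr /cmod.
by rewrite ler_sqrt ?addr_ge0 ?sqr_ge0 // lerDl sqr_ge0.
Qed.

Lemma ReB (a b : C) : complex.Re (a - b) = complex.Re a - complex.Re b.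
Proof. by case: a; case: b. Qed.

Lemma ReD (a b : C) : complex.Re (a + b) = complex.Re a + complex.Re b.
Proof. by case: a; case: b. Qed.

Lemma Re_sum (I : Type) (s : seq I) (g : I -> C) :
  complex.Re (\sum_(i <- s) g i) = \sum_(i <- s) complex.Re (g i).
Proof. elim: s => [|a s IH]; first by rewrite !big_nil. by rewrite !big_cons ReD IH. Qed.

Lemma ReV_gt0 (w : C) : 0 < complex.Re w -> 0 < complex.Re (w^-1).
Proof.
case: w => a b /= Ha.
by rewrite divr_gt0 // ltr_wpDr ?sqr_ge0 // exprn_gt0.
Qed.

Lemma deriv_prod_log (s : seq C) (x : C) : (forall z, z \in s -> x != z) ->
  (\prod_(z <- s) ('X - z%:P))^`().[x] =
  (\prod_(z <- s) ('X - z%:P)).[x] * \sum_(z <- s) (x - z)^-1.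
Proof.
elim: s => [|a s IH] Hs; first by rewrite !big_nil derivC horner0 mulr0.
rewrite !big_cons derivM derivXsubC mul1r hornerD hornerM IH; last first.
  by move=> z zs; apply: Hs; rewrite in_cons zs orbT.
rewrite !hornerXsubC.
have Ha : x - a != 0 by rewrite subr_eq0 Hs // mem_head.
rewrite hornerM hornerXsubC.
set P := (\prod_(_ <- s) _).[x]; set S := \sum_(_ <- s) _.
by field.

Qed.


Lemma split_facts (rho : R) (F : {poly C}) :
  (forall x, rho < complex.Re x -> F.[x] = 0 -> F = 0) -> F != 0 ->
  exists rs c, [/\ F = c *: \prod_(z <- rs) ('X - z%:P), c != 0,
    (forall z, z \in rs -> complex.Re z <= rho) & size F = (size rs).+1].
Proof.
move=> HF Fn0; have [rs Ers] := closed_field_poly_normal F.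
have cn0 : lead_coef F != 0 by rewrite lead_coef_eq0.
exists rs, (lead_coef F); split => //.
- move=> z zs; rewrite leNgt; apply/negP => Hz.
  have : F = 0.
    apply: (HF z Hz); apply/eqP; rewrite -/(root F z) Ers rootZ //.
    by rewrite root_prod_XsubC.
  by move/eqP; rewrite (negbTE Fn0).
- by rewrite {1}Ers size_scale // size_prod_XsubC.
Qed.

Lemma deriv_eval (rho : R) (F : {poly C}) rs c x :
  F = c *: \prod_(z <- rs) ('X - z%:P) ->
  (forall z, z \in rs -> complex.Re z <= rho) -> rho < complex.Re x ->
  F^`().[x] = F.[x] * \sum_(z <- rs) (x - z)^-1.
Proof.
move=> -> Hrs Hx; rewrite derivZ !hornerZ deriv_prod_log ?mulrA //.
move=> z zs; apply/negP => /eqP xz; move: (Hrs z zs); rewrite -xz.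
by rewrite leNgt Hx.
Qed.

Lemma halfplane_deriv (rho : R) (F : {poly C}) :
  (forall x, rho < complex.Re x -> F.[x] = 0 -> F = 0) ->
  forall x, rho < complex.Re x -> F^`().[x] = 0 -> F^`() = 0.
Proof.
move=> HF x Hx H0.
have [->|Fn0] := eqVneq F 0; first by rewrite deriv0.
have [rs [c [EF cn0 Hrs sF]]] := @split_facts rho F HF Fn0.
case: rs EF Hrs sF => [|a rs] EF Hrs sF.
  by rewrite EF big_nil derivZ derivC scaler0.
exfalso.
move: H0; rewrite (@deriv_eval rho F _ _ x EF Hrs Hx) => /eqP; rewrite mulf_eq0 => /orP[].
  by move/eqP/(HF x Hx)/eqP; rewrite (negbTE Fn0).
move/eqP => S0.
have : 0 < complex.Re (\sum_(z <- a :: rs) (x - z)^-1).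
  rewrite Re_sum big_cons; apply: ltr_pwDl.
    by apply: ReV_gt0; rewrite ReB subr_gt0; apply: le_lt_trans (Hrs a (mem_head _ _)) Hx.
  rewrite big_seq; apply: sumr_ge0 => z zs; apply/ltW/ReV_gt0.
  rewrite ReB subr_gt0; apply: le_lt_trans Hx.
  by apply: Hrs; rewrite in_cons zs orbT.
by rewrite S0 /= ltxx.
Qed.

Lemma sum_const_seq (I : Type) (s : seq I) (k : R) : \sum_(z <- s) k = k *+ size s.
Proof. elim: s => [|a s IH]; first by rewrite big_nil. by rewrite big_cons IH mulrS. Qed.

Lemma cmod0 : cmod (0 : C) = 0.
Proof. by rewrite /cmod /= expr0n /= addr0 sqrtr0. Qed.

Lemma deriv_bound (rho : R) (F : {poly C}) :
  (forall x, rho < complex.Re x -> F.[x] = 0 -> F = 0) ->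
  forall x, rho < complex.Re x ->
  cmod (F^`().[x]) <= cmod (F.[x]) * ((size F)%:R / (complex.Re x - rho)).
Proof.
move=> HF x Hx.
have [->|Fn0] := eqVneq F 0; first by rewrite deriv0 horner0 cmod0 mul0r.
have [rs [c [EF cn0 Hrs sF]]] := @split_facts rho F HF Fn0.
rewrite (@deriv_eval rho F _ _ x EF Hrs Hx) cmodM ler_wpM2l ?cmod_ge0 //.
have dpos : 0 < complex.Re x - rho by rewrite subr_gt0.
have H : forall z, z \in rs -> cmod ((x - z)^-1) <= (complex.Re x - rho)^-1.
  move=> z zs; rewrite cmodV.
  have h1 : complex.Re x - rho <= cmod (x - z).
    apply: le_trans (Re_le_cmod _); rewrite ReB lerD2l lerN2; exact: Hrs.
  have h2 : 0 < cmod (x - z) by apply: lt_le_trans h1.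
  by rewrite lef_pV2 ?posrE.
have S1 : \sum_(z <- rs) cmod ((x - z)^-1) <= \sum_(z <- rs) (complex.Re x - rho)^-1.
  rewrite [leLHS]big_seq [leRHS]big_seq; apply: ler_sum => z zs; exact: H.
have S0 := cmod_sum _ rs (fun z => (x - z)^-1).
apply: (le_trans S0); apply: (le_trans S1).
rewrite sum_const_seq.
have -> : (complex.Re x - rho)^-1 *+ size rs = (size rs)%:R * (complex.Re x - rho)^-1 by rewrite mulr_natl.
apply: ler_wpM2r; first by rewrite invr_ge0 ltW.
by rewrite ler_nat sF.
Qed.

Lemma cauchy_bound (F : {poly C}) z : F \is monic -> root F z ->
  cmod z <= Num.max 1 (\sum_(i < (size F).-1) cmod F`_i).
Proof.
move=> mF rz; set n := (size F).-1.
have sF : size F = n.+1.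
  by rewrite /n prednK // size_poly_gt0 monic_neq0.
have lF : F`_n = 1 by move: (monicP mF); rewrite lead_coefE.
have [t1|t1] := leP (cmod z) 1; first by rewrite le_max t1.
rewrite le_max; apply/orP; right.
move: rz; rewrite /root horner_coef sF big_ord_recr /= lF mul1r addrC.
rewrite addr_eq0 => /eqP Ez.
have tpos : 0 < cmod z by apply: lt_trans t1.
case: n sF lF Ez => [|n] sF lF Ez.
  by move: Ez; rewrite big_ord0 expr0 oppr0 => /eqP; rewrite oner_eq0.
have H1 : cmod z ^+ n.+1 <= \sum_(i < n.+1) cmod F`_i * cmod z ^+ n.
  rewrite -cmodX Ez cmodN.
  apply: le_trans (cmod_sum _ _ _) _.
  apply: ler_sum => i _; rewrite cmodM cmodX ler_wpM2l ?cmod_ge0 //.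
  by rewrite ler_eXn2l // -ltnS.
move: H1; rewrite -mulr_suml exprS ler_pM2r //; exact: exprn_gt0.
Qed.

End Aux.

Section Main.
Variable R : realType.

Lemma rho_ub (f : {poly R}) (B : R) :
  (forall z, root (map_poly (real_complex R) f) z -> cmod z <= B) -> 0 <= B ->
  rho f <= B.
Proof.
move=> HB BB; rewrite /rho.
case: (pselect ([set cmod z | z in [set z : R[i] | root (map_poly (real_complex R) f) z]] !=set0)) => [ne|e].
  by apply: ge_sup => // _ [z rz <-]; apply: HB.
by rewrite sup_out // => -[].
Qed.

Lemma root_le_rho (f : {poly R}) (B : R) z :
  (forall z, root (map_poly (real_complex R) f) z -> cmod z <= B) ->
  root (map_poly (real_complex R) f) z -> cmod z <= rho f.
Proof.
move=> HB rz; rewrite /rho; apply: sup_upper_bound; last by exists z.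
split; first by exists (cmod z); exists z.
by exists B => _ [w rw <-]; apply: HB.
Qed.

Lemma size_derivn_le (F : {poly R[i]}) k : (size (F^`(k)) <= size F)%N.
Proof.
elim: k => [|k IH]; first by rewrite derivn0.
rewrite derivnS; apply: leq_trans IH.
have [->|Fn0] := eqVneq (F^`(k)) 0; first by rewrite deriv0 size_poly0.
exact/ltnW/lt_size_deriv.
Qed.


Lemma qderivn_p (p : nat) (q : {poly R}) :
  q \is monic -> size q = p.+1 -> q^`(p).[1] = (p`!)%:R.
Proof.
move=> mq sq.
have -> : q^`(p) = ((p`!)%:R)%:P.
  apply/polyP => i; rewrite coef_derivn coefC.
  case: i => [|i] /=.
    rewrite addn0 ffactnn.
    by move: (monicP mq); rewrite lead_coefE sq /= => ->.
  by rewrite nth_default ?mul0rn // sq addnS ltnS leq_addr.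
by rewrite hornerC.
Qed.

Lemma deriv_f_eval (q r : {poly R}) (mu : R) j :
  ((map_poly (real_complex R) (q - mu *: r))^`(j)).[1] =
  (q^`(j).[1] - mu * r^`(j).[1])%:C.
Proof.
have E1 : (1 : R[i]) = (1 : R)%:C by rewrite rmorph1.
rewrite derivn_map E1 horner_map /=.
by rewrite derivnB derivnZ hornerD hornerN hornerZ.
Qed.

End Main.

Theorem proposition8 (R : realType) (p : nat) (q r : {poly R}) (l : R) :
  q \is monic -> size q = p.+1 -> q.[1] = 0 ->
  size r = p -> 0 < l ->
  exists C0 : R, exists mu0 : R,
    0 < C0 /\ 0 < mu0 < l /\
    forall mu : R, 0 < mu < mu0 ->
      sup [set rho (q - nu *: r) | nu in [set nu : R | mu <= nu <= l]]
        >= 1 - C0 * (mu / l).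
Proof.
move=> mq sq q1 sr l0.
pose P := fun k => q^`(k).[1] != 0.
have exP : exists k, P k by exists p; rewrite /P qderivn_p // pnatr_eq0 -lt0n fact_gt0.
case: (ex_minnP exP) => m Pm Hmin.
case: m Pm Hmin => [|k] Pm Hmin.
  by move: Pm; rewrite /P derivn0 q1 eqxx.
have Hk0 : q^`(k).[1] = 0.
  apply/eqP; apply: contraT => Hk; move: (Hmin k Hk); by rewrite ltnn.
set A := `|q^`(k.+1).[1]|.
set B := `|r^`(k.+1).[1]|.
set D := `|r^`(k).[1]|.
have A0 : 0 < A by rewrite normr_gt0.
set K := 2 * (p.+1)%:R * D / A.
have K0 : 0 <= K.
  rewrite /K; apply: divr_ge0 (ltW A0); apply: mulr_ge0; last exact: normr_ge0.
  by apply: mulr_ge0; rewrite ?ler0n.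
exists (l * (K + 1)), (Num.min (l / 2) (A / (2 * (B + 1)))).
have B0 : 0 <= B by exact: normr_ge0.
split; first by rewrite mulr_gt0 // ltr_pwDr.
have mu0p : 0 < Num.min (l / 2) (A / (2 * (B + 1))).
  by rewrite lt_min divr_gt0 //= divr_gt0 // mulr_gt0 // ltr_pwDr.
split.
  rewrite mu0p /= gt_min; apply/orP; left.
  by rewrite ltr_pdivrMr // ltr_pMr // ltr1n.
move=> mu /andP[mu_gt0 mu_lt].
move: mu_lt; rewrite lt_min => /andP[mu_l2 mu_A].
have mu_l : mu <= l.
  apply/ltW; apply: lt_trans mu_l2 _; by rewrite ltr_pdivrMr // ltr_pMr // ltr1n.
set BB := Num.max 1 (\sum_(i < p) (`|q`_i| + l * `|r`_i|)).
have B0ge : 0 <= BB by rewrite le_max ler01.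
have Hroots : forall nu, 0 <= nu <= l -> forall z,
    root (map_poly (real_complex R) (q - nu *: r)) z -> cmod z <= BB.
  move=> nu /andP[nu0 nul] z rz.
  have sl : (size (- (nu *: r)) < size q)%N.
    by rewrite size_polyN sq ltnS; apply: leq_trans (size_scale_leq _ _) _; rewrite sr.
  have sF : size (q - nu *: r) = p.+1 by rewrite size_polyDl // sq.
  have mF : (q - nu *: r) \is monic by rewrite monicE lead_coefDl // (monicP mq).
  have mFc : map_poly (real_complex R) (q - nu *: r) \is monic by rewrite map_monic.
  apply: le_trans (@cauchy_bound _ _ _ mFc rz) _.
  rewrite size_map_poly sF /= ge_max; apply/andP; split; rewrite le_max ?lexx //.
  apply/orP; right; apply: ler_sum => i _.
  rewrite coef_map /= cmod_real coefB coefZ.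
  apply: le_trans (ler_normB _ _) _.
  rewrite lerD2l normrM (ger0_norm nu0); apply: ler_wpM2r => //; exact: normr_ge0.
have rho_mu : 1 - K * mu <= rho (q - mu *: r).
  have [h1|h1] := leP 1 (rho (q - mu *: r)).
    apply: le_trans h1; rewrite lerBlDr lerDl; apply: mulr_ge0 => //; exact: ltW.
  set rh := rho (q - mu *: r) in h1 *.
  set Fc := map_poly (real_complex R) (q - mu *: r).
  have mu0l : 0 <= mu <= l by rewrite mu_l andbT ltW.
  have Hrz : forall z, root Fc z -> cmod z <= rh.
    by move=> z rz; exact: (@root_le_rho _ _ _ _ (Hroots mu mu0l) rz).
  have PF : forall j x, rh < complex.Re x -> (Fc^`(j)).[x] = 0 -> Fc^`(j) = 0.
    elim=> [|j IH] x Hx.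
      rewrite derivn0 => Fx; exfalso.
      have : cmod x <= rh by apply: Hrz; apply/eqP.
      by rewrite leNgt (lt_le_trans Hx (Re_le_cmod _ _)).
    by rewrite derivnS; apply: (@halfplane_deriv _ rh _ IH x Hx).
  have Re1 : rh < complex.Re (1 : R[i]) by [].
  have Hb := @deriv_bound _ rh (Fc^`(k)) (PF k) 1 Re1.
  rewrite -derivnS !deriv_f_eval !cmod_real Hk0 sub0r normrN normrM (gtr0_norm mu_gt0) in Hb.
  have sN : (size (Fc^`(k)) <= p.+1)%N.
    apply: leq_trans (@size_derivn_le _ _ _) _.
    rewrite size_map_poly size_polyDl ?sq // size_polyN ltnS.
    by apply: leq_trans (size_scale_leq _ _) _; rewrite sr.
  move: Hb; set N := (size (Fc^`(k)))%:R.
  have NP : N <= (p.+1)%:R by rewrite ler_nat.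
  have Re1' : complex.Re (1 : R[i]) = 1 by [].
  rewrite Re1' => Hb.
  have e0 : 0 < 1 - rh by rewrite subr_gt0.
  have h2 := lerB_dist (q^`(k.+1).[1]) (mu * r^`(k.+1).[1]).
  rewrite normrM (gtr0_norm mu_gt0) -/A -/B in h2.
  rewrite -/D in Hb.
  have h3 : mu * B <= A / 2.
    move: mu_A; rewrite ltr_pdivlMr ?mulr_gt0 ?ltr_pwDr // => h.
    lra.
  have h4 : A / 2 <= mu * D * (N / (1 - rh)).
    have := le_trans h2 Hb; lra.
  have h5 : A / 2 * (1 - rh) <= mu * D * N.
    by move: h4; rewrite mulrA ler_pdivlMr.
  have h6 : mu * D * N <= mu * D * (p.+1)%:R.
    by apply: ler_wpM2l => //; apply: mulr_ge0 (ltW mu_gt0) (normr_ge0 _).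
  have h7 : (1 - rh) * A <= 2 * (p.+1)%:R * D * mu.
    have := le_trans h5 h6; lra.
  have h8 : 1 - rh <= K * mu.
    rewrite /K mulrAC ler_pdivlMr //.
  lra.
have Hs : has_sup [set rho (q - nu *: r) | nu in [set nu : R | mu <= nu <= l]].
  split.
    by exists (rho (q - mu *: r)); exists mu => //=; rewrite lexx mu_l.
  exists BB => _ [nu /= /andP[Hnu1 Hnu2] <-].
  apply: (@rho_ub _ _ _ (Hroots nu _) B0ge).
  by rewrite Hnu2 andbT; apply: le_trans Hnu1; exact: ltW.
have Hsup : rho (q - mu *: r) <=
    sup [set rho (q - nu *: r) | nu in [set nu : R | mu <= nu <= l]].
  by apply: (sup_upper_bound Hs); exists mu => //=; rewrite lexx mu_l.
have -> : l * (K + 1) * (mu / l) = (K + 1) * mu.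
  by field; rewrite gt_eqF //.
lra.
Qed.
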